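(* Let $T\ge1$. For $t=0,1,\dots,T$ let $d_t\ge1$, let $M_t\in\mathbb{R}^{d_t\times d_t}$ be symmetric positive definite, and for $t=1,\dots,T$ let $A_t\in\mathbb{R}^{d_t\times d_{t-1}}$, $G_t\in\mathbb{R}^{K_t\times d_t}$, $R_t\in\mathbb{R}^{K_t\times K_t}$ symmetric positive definite, $r_t\in\mathbb{R}^{K_t}$, and define $\ell_t(u)=\frac12\|r_t-G_tu\|^2_{R_t^{-1}}$. Let $\eta_\delta>0$, $m_0\in\mathbb{R}^{d_0}$, and define recursively for $t=1,\dots,T$ $$m_t=\arg\min_{u\in\mathbb{R}^{d_t}}\Big\{\eta_\delta\,\ell_t(u)+\tfrac12\|u-A_tm_{t-1}\|^2_{M_t}\Big\}.$$ Assume there exists $\gamma\in[0,1)$ such that $A_t^\top M_tA_t\preceq\gamma M_{t-1}$ for all $t=1,\dots,T$. Then for any reference sequence $v_0\in\mathbb{R}^{d_0},\dots,v_T\in\mathbb{R}^{d_T}$, $$\sum_{t=1}^T\{\ell_t(m_t)-\ell_t(v_t)\}\le\frac{1}{2\eta_\delta}\|v_0-m_0\|^2_{M_0}+\frac{1}{2\eta_\delta(1-\gamma)}\sum_{t=1}^T\|v_t-A_tv_{t-1}\|^2_{M_t}.$$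
   Context: For a symmetric positive semidefinite matrix $M$, $\|v\|_M^2=v^\top Mv$; $\preceq$ is the Loewner order. In the application, $m_t$ is the posterior mean of a recursive Gaussian discrepancy update with pre-update covariance $P_t=M_t^{-1}$ and pre-update mean $A_tm_{t-1}$. *)

(* Defs.v *)
From mathcomp Require Import all_boot all_order all_algebra.
Set Implicit Arguments. Unset Strict Implicit. Unset Printing Implicit Defensive.
Import Order.TTheory GRing.Theory Num.Theory.
Local Open Scope ring_scope.

(* ||v||_M^2 = v^T M v, for column vectors *)
Definition qnorm (R : ringType) (n : nat) (M : 'M[R]_n) (v : 'cV[R]_n) : R :=
  (v^T *m M *m v) ord0 ord0.

Definition sym_mx (R : ringType) (n : nat) (M : 'M[R]_n) : Prop := M^T = M.

Definition spd (R : numDomainType) (n : nat) (M : 'M[R]_n) : Prop :=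
  sym_mx M /\ forall x : 'cV[R]_n, x != 0 -> 0 < qnorm M x.

Definition loewner_le (R : numDomainType) (n : nat) (A B : 'M[R]_n) : Prop :=
  forall v : 'cV[R]_n, qnorm A v <= qnorm B v.

Definition is_argmin (R : numDomainType) (T : Type) (f : T -> R) (x : T) : Prop :=
  forall y, f x <= f y.

Definition loss (R : fieldType) (K d : nat) (G : 'M[R]_(K, d)) (Rm : 'M[R]_K)
  (r : 'cV[R]_K) (u : 'cV[R]_d) : R :=
  2^-1 * qnorm (invmx Rm) (r - G *m u).

(* Main.v *)
Require Import Defs.
From mathcomp Require Import all_boot all_order all_algebra.
From mathcomp Require Import ring lra.
Set Implicit Arguments. Unset Strict Implicit. Unset Printing Implicit Defensive.
Import Order.TTheory GRing.Theory Num.Theory.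
Local Open Scope ring_scope.

Section H.
Variable R : realFieldType.

Definition bf (n : nat) (M : 'M[R]_n) (x y : 'cV[R]_n) : R := (x^T *m M *m y) ord0 ord0.

Lemma bfDl n (M : 'M[R]_n) x1 x2 y : bf M (x1 + x2) y = bf M x1 y + bf M x2 y.
Proof. by rewrite /bf linearD /= !mulmxDl mxE. Qed.
Lemma bfDr n (M : 'M[R]_n) x y1 y2 : bf M x (y1 + y2) = bf M x y1 + bf M x y2.
Proof. by rewrite /bf mulmxDr mxE. Qed.
Lemma bfZl n (M : 'M[R]_n) a x y : bf M (a *: x) y = a * bf M x y.
Proof. by rewrite /bf linearZ /= -!scalemxAl mxE. Qed.
Lemma bfZr n (M : 'M[R]_n) a x y : bf M x (a *: y) = a * bf M x y.
Proof. by rewrite /bf -scalemxAr mxE. Qed.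
Lemma bf_sym n (M : 'M[R]_n) x y : sym_mx M -> bf M x y = bf M y x.
Proof.
move=> sM; rewrite /bf.
have -> : (x^T *m M *m y) ord0 ord0 = ((x^T *m M *m y)^T) ord0 ord0 by rewrite [RHS]mxE.
by rewrite !trmx_mul trmxK sM mulmxA.
Qed.

Lemma qnorm_lin n (M : 'M[R]_n) a b x y :
  qnorm M (a *: x + b *: y) =
  a ^+ 2 * qnorm M x + a * b * (bf M x y + bf M y x) + b ^+ 2 * qnorm M y.
Proof.
rewrite /qnorm -/(bf M _ _) !(bfDl, bfDr, bfZl, bfZr) /bf. ring.
Qed.

Lemma qnormZM n (M : 'M[R]_n) g x : qnorm (g *: M) x = g * qnorm M x.
Proof. by rewrite /qnorm -scalemxAr -(scalemxAl g (x^T *m M) x) mxE. Qed.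

Lemma qnorm_mul n k (M : 'M[R]_n) (A : 'M[R]_(n, k)) e :
  qnorm M (A *m e) = qnorm (A^T *m M *m A) e.
Proof. by rewrite /qnorm trmx_mul !mulmxA. Qed.

Lemma qnorm0 n (M : 'M[R]_n) : qnorm M 0 = 0.
Proof. by rewrite /qnorm mulmx0 mxE. Qed.

Lemma spd_ge0 n (M : 'M[R]_n) x : spd M -> 0 <= qnorm M x.
Proof.
move=> [_ H]; have [->|nz] := eqVneq x 0; first by rewrite qnorm0.
exact/ltW/H.
Qed.

Lemma inv_ge0 n (M : 'M[R]_n) x : spd M -> 0 <= qnorm (invmx M) x.
Proof.
move=> sM; case: (boolP (M \in unitmx)) => uM; last first.
  by rewrite invmx_out //; apply: spd_ge0.
have -> : x = M *m (invmx M *m x) by rewrite mulKVmx.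
rewrite qnorm_mul; case: (sM) => sy _; rewrite sy -(mulmxA M) mulVmx // mulmx1.
exact: spd_ge0.
Qed.

Lemma quad_zero (L q : R) : (forall s, 0 <= s * L + s ^+ 2 * q) -> L = 0.
Proof.
move=> H; have H1 := H 1; have H2 := H (-1).
have q0 : 0 <= q by nra.
have [qz|qp] := eqVneq q 0.
  by move: H1 H2; rewrite qz; lra.
have qp' : 0 < q by rewrite lt_def qp q0.
have H3 := H (- L / (2 * q)).
have e : 2 * q * (- L / (2 * q)) = - L by field; rewrite qp.
have : L ^+ 2 <= 0 by nra.
by move=> h; apply/eqP; rewrite -sqrf_eq0 eq_le h sqr_ge0.
Qed.

Lemma three_point n k (N : 'M[R]_k) (G : 'M[R]_(k, n)) (M : 'M[R]_n)
  (p : 'cV[R]_k) (a m v : 'cV[R]_n) eta :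
  0 < eta -> spd N -> spd M ->
  (forall u, eta * (2^-1 * qnorm (invmx N) (p - G *m u)) + 2^-1 * qnorm M (u - a)
     >= eta * (2^-1 * qnorm (invmx N) (p - G *m m)) + 2^-1 * qnorm M (m - a)) ->
  eta * (2^-1 * qnorm (invmx N) (p - G *m m)) + 2^-1 * qnorm M (m - a)
    + 2^-1 * qnorm M (v - m)
  <= eta * (2^-1 * qnorm (invmx N) (p - G *m v)) + 2^-1 * qnorm M (v - a).
Proof.
move=> eta0 sN sM H.
set h := v - m.
have E1 s : p - G *m (m + s *: h) = 1 *: (p - G *m m) + (- s) *: (G *m h).
  by rewrite scale1r mulmxDr -scalemxAr scaleNr opprD addrA.
have E2 s : m + s *: h - a = 1 *: (m - a) + s *: h.
  by rewrite scale1r addrAC.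
pose L := eta * 2^-1 * (- (bf (invmx N) (p - G *m m) (G *m h)
      + bf (invmx N) (G *m h) (p - G *m m))) + 2^-1 * (bf M (m - a) h + bf M h (m - a)).
pose q := eta * 2^-1 * qnorm (invmx N) (G *m h) + 2^-1 * qnorm M h.
have L0 : L = 0.
  apply: (@quad_zero L q) => s; have := H (m + s *: h); rewrite E1 E2 !qnorm_lin.
  rewrite !expr1n !mul1r. move=> HH. rewrite -subr_ge0 in HH.
  apply: (le_trans HH); rewrite le_eqVlt; apply/orP; left; apply/eqP. rewrite /L /q. ring.
have ev : v = m + 1 *: h by rewrite scale1r /h addrC subrK.
rewrite [in X in _ <= X]ev E1 E2 !qnorm_lin.
rewrite !expr1n !mul1r.
have g0 := inv_ge0 (G *m h) sN.
move: L0; rewrite /L; nra.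
Qed.

Lemma step_ineq n k (M : 'M[R]_n) (Mp : 'M[R]_k) (A : 'M[R]_(n, k)) g
  (w : 'cV[R]_n) (e : 'cV[R]_k) :
  spd M -> spd Mp -> 0 <= g -> g < 1 -> qnorm M (A *m e) <= g * qnorm Mp e ->
  (1 - g) * qnorm M (w + A *m e) <= qnorm M w + (1 - g) * qnorm Mp e.
Proof.
move=> sM sMp g0 g1 H; set y := A *m e in H *.
have sy := bf_sym w y sM.1.
have Qs : qnorm M (w + y) = qnorm M w + (bf M w y + bf M y w) + qnorm M y.
  by rewrite -{1}(scale1r w) -{1}(scale1r y) qnorm_lin !expr1n !mul1r.
have Qc := spd_ge0 ((1 - g) *: y + (- g) *: w) sM; rewrite qnorm_lin in Qc.
have Qy := spd_ge0 y sM; have Qe := spd_ge0 e sMp; have Qw := spd_ge0 w sM.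
rewrite Qs; rewrite sy in Qc *.
have [gz|gp] := eqVneq g 0.
  have y0 : y = 0.
    apply/eqP; apply: contraT => nz; have := sM.2 y nz; move: H; rewrite gz; lra.
  by rewrite y0 /bf trmx0 mul0mx mul0mx mxE qnorm0 gz; lra.
have gp' : 0 < g by rewrite lt_def gp g0.
have key : 0 <= g * (qnorm M w + (1 - g) * qnorm Mp e
   - (1 - g) * (qnorm M w + (bf M y w + bf M y w) + qnorm M y)).
  nra.
rewrite pmulr_rge0 // subr_ge0 in key.
exact: key.
Qed.
End H.

Theorem theorem1 (R : realFieldType) (T : nat) (d K : nat -> nat)
  (M : forall t, 'M[R]_(d t))
  (A : forall t, 'M[R]_(d t, d t.-1))
  (G : forall t, 'M[R]_(K t, d t))
  (Rm : forall t, 'M[R]_(K t))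
  (r : forall t, 'cV[R]_(K t))
  (eta gamma : R)
  (m : forall t, 'cV[R]_(d t))
  (v : forall t, 'cV[R]_(d t)) :
  (1 <= T)%N ->
  (forall t, (t <= T)%N -> (1 <= d t)%N) ->
  (forall t, (t <= T)%N -> spd (M t)) ->
  (forall t, (1 <= t <= T)%N -> spd (Rm t)) ->
  0 < eta ->
  (forall t, (1 <= t <= T)%N ->
     is_argmin (fun u : 'cV[R]_(d t) =>
        eta * loss (G t) (Rm t) (r t) u
        + 2^-1 * qnorm (M t) (u - A t *m m t.-1)) (m t)) ->
  0 <= gamma -> gamma < 1 ->
  (forall t, (1 <= t <= T)%N ->
     loewner_le ((A t)^T *m M t *m A t) (gamma *: M t.-1)) ->
  \sum_(1 <= t < T.+1)
      (loss (G t) (Rm t) (r t) (m t) - loss (G t) (Rm t) (r t) (v t))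
  <= (2 * eta)^-1 * qnorm (M 0%N) (v 0%N - m 0%N)
     + (2 * eta * (1 - gamma))^-1 *
       \sum_(1 <= t < T.+1) qnorm (M t) (v t - A t *m v t.-1).
Proof.
move=> T1 _ sM sR eta0 amin g0 g1 loew.
pose ell t := loss (G t) (Rm t) (r t) (m t) - loss (G t) (Rm t) (r t) (v t).
pose W t := qnorm (M t) (v t - A t *m v t.-1).
pose E t := qnorm (M t) (v t - m t).
have step : forall t, (1 <= t < T.+1)%N ->
    eta * (1 - gamma) * ell t <= 2^-1 * W t + 2^-1 * (1 - gamma) * (E t.-1 - E t).
  move=> t /andP[t1 tT]; rewrite ltnS in tT.
  have sMt := sM t tT.
  have sMp := sM t.-1 (leq_trans (leq_pred t) tT).
  have tT' : (1 <= t <= T)%N by rewrite t1 tT.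
  have sRt := sR t tT'.
  have tp := three_point (v t) eta0 sRt sMt (amin t tT').
  have Qma := spd_ge0 (m t - A t *m m t.-1) sMt.
  have eq : v t - A t *m m t.-1 = (v t - A t *m v t.-1) + A t *m (v t.-1 - m t.-1).
    by rewrite mulmxBr addrA subrK.
  have lw : qnorm (M t) (A t *m (v t.-1 - m t.-1)) <= gamma * qnorm (M t.-1) (v t.-1 - m t.-1).
    by rewrite qnorm_mul -qnormZM; apply: loew.
  have st := step_ineq (v t - A t *m v t.-1) sMt sMp g0 g1 lw.
  rewrite -eq in st.
  have g1' : 0 <= 1 - gamma by lra.
  have tp2 := ler_wpM2l g1' tp.
  rewrite /ell /loss /W /E.
  nra.
have tel : \sum_(1 <= t < T.+1) (E t.-1 - E t) = E 0%N - E T.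
  rewrite big_add1 /=.
  rewrite -[LHS]opprK -sumrN (eq_bigr (fun k => E k.+1 - E k)); last by move=> i _; rewrite opprB.
  by rewrite telescope_sumr // opprB.
have S : eta * (1 - gamma) * \sum_(1 <= t < T.+1) ell t
    <= 2^-1 * \sum_(1 <= t < T.+1) W t + 2^-1 * (1 - gamma) * (E 0%N - E T).
  rewrite [X in X <= _]mulr_sumr; apply: le_trans (ler_sum_nat step) _.
  by rewrite big_split -!mulr_sumr tel.
set X := \sum_(1 <= t < T.+1) ell t in S.
change (X <= (2 * eta)^-1 * E 0%N + (2 * eta * (1 - gamma))^-1 * \sum_(1 <= t < T.+1) W t).
have ET : 0 <= E T by apply: spd_ge0; apply: sM.
have gp : 0 < 1 - gamma by lra.
have c0 : 0 < eta * (1 - gamma) by apply: mulr_gt0.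
have -> : (2 * eta)^-1 * E 0%N + (2 * eta * (1 - gamma))^-1 * \sum_(1 <= t < T.+1) W t
   = (2^-1 * \sum_(1 <= t < T.+1) W t + 2^-1 * (1 - gamma) * E 0%N) / (eta * (1 - gamma)).
  field; rewrite (gt_eqF eta0) (gt_eqF gp) //.
rewrite ler_pdivlMr // mulrC.
nra.
Qed.
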